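(* Let $f \in C((0,\infty);(0,\infty))$ be asymptotically increasing with $\lim_{x\to\infty} f(x)/x = \infty$, and define $\bar F(x) = \int_0^x f(s)\,ds$ for $x>0$. Then $\bar F$ preserves superexponential growth.
   Context: ''$f$ is asymptotically increasing'' means that there is a continuous increasing function $\phi:(0,\infty)\to(0,\infty)$ with $f(x)/\phi(x)\to 1$ as $x\to\infty$. A function $g \in C((0,\infty);(0,\infty))$ exhibits superexponential growth if $g(x)\to\infty$ as $x\to\infty$ and $\lim_{x\to\infty} g(x-\epsilon)/g(x) = 0$ for each $\epsilon>0$. A function $\phi \in C((0,\infty);(0,\infty))$ preserves superexponential growth if for every $g$ exhibiting superexponential growth and every $\epsilon>0$, $\lim_{x\to\infty}\phi(g(x-\epsilon))/\phi(g(x)) = 0$. *)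

(* Defs.v *)
From Stdlib Require Import Reals.
From Coquelicot Require Import Coquelicot.
Open Scope R_scope.

Definition pos_cont (f : R -> R) : Prop :=
  forall x, 0 < x -> continuous f x /\ 0 < f x.

Definition asymp_increasing (f : R -> R) : Prop :=
  exists phi : R -> R,
    pos_cont phi /\
    (forall x y, 0 < x -> x < y -> phi x < phi y) /\
    is_lim (fun x => f x / phi x) p_infty 1.

Definition superexp (g : R -> R) : Prop :=
  pos_cont g /\
  is_lim g p_infty p_infty /\
  forall eps, 0 < eps -> is_lim (fun x => g (x - eps) / g x) p_infty 0.

Definition preserves_superexp (phi : R -> R) : Prop :=
  pos_cont phi /\
  forall g, superexp g ->
    forall eps, 0 < eps ->
      is_lim (fun x => phi (g (x - eps)) / phi (g x)) p_infty 0.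

(* Main.v *)
Require Import Defs.
From Stdlib Require Import Reals Lra.
From Coquelicot Require Import Coquelicot.
Open Scope R_scope.

Lemma ball_R (x e y : R) : ball x e y -> Rabs (y - x) < e.
Proof. unfold ball; simpl; unfold AbsRing_ball, abs, minus, plus, opp; simpl. auto. Qed.

Section S.
Variables (f Fbar : R -> R).
Hypothesis Hf : pos_cont f.
Hypothesis HF : forall x, 0 < x -> is_RInt_gen f (at_right 0) (at_point x) (Fbar x).

Lemma exR a b : 0 < a -> 0 < b -> ex_RInt f a b.
Proof.
  intros ha hb. apply (ex_RInt_continuous (V:=R_CompleteNormedModule)). intros z Hz.
  apply Hf. assert (0 < Rmin a b) by (apply Rmin_glb_lt; lra). lra.
Qed.

Lemma Fdiff a b : 0 < a -> 0 < b -> Fbar b = Fbar a + RInt f a b.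
Proof.
  intros ha hb.
  pose proof (is_RInt_gen_Chasles (Fa:=at_right 0) (Fc := at_point b) f a (Fbar a) (RInt f a b) (HF a ha)
    (proj2 (is_RInt_gen_at_point _ _ _ _) (RInt_correct (V:=R_CompleteNormedModule) _ _ _ (exR a b ha hb)))) as H1.
  pose proof (is_RInt_gen_unique (V:=R_CompleteNormedModule) (Fa:=at_right 0) (Fb := at_point b) _ _ H1) as E1.
  pose proof (is_RInt_gen_unique (V:=R_CompleteNormedModule) (Fa:=at_right 0) (Fb := at_point b) _ _ (HF b hb)) as E2.
  rewrite <- E2, E1. reflexivity.
Qed.

Lemma Fnonneg a : 0 < a -> 0 <= Fbar a.
Proof.
  intros ha.
  assert (H : norm (Fbar a) <= Fbar a).
  { apply (RInt_gen_norm (Fa := at_right 0) (Fb := at_point a) f f); try apply HF; auto.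
    - apply (Filter_prod _ _ _ (fun e => 0 < e < a) (fun y => y = a)).
      + exists (mkposreal a ha). intros y Hy Hy'. split; auto.
        unfold ball in Hy; simpl in Hy; unfold AbsRing_ball, abs, minus, plus, opp in Hy; simpl in Hy.
        apply Rabs_def2 in Hy. lra.
      + reflexivity.
      + simpl. intros x y Hx Hy. lra.
    - apply (Filter_prod _ _ _ (fun e => 0 < e < a) (fun y => y = a)).
      + exists (mkposreal a ha). intros y Hy Hy'. split; auto.
        unfold ball in Hy; simpl in Hy; unfold AbsRing_ball, abs, minus, plus, opp in Hy; simpl in Hy.
        apply Rabs_def2 in Hy. lra.
      + reflexivity.
      + simpl. intros x y Hx Hy z Hz. 
        assert (0 < f z) by (apply Hf; lra).
        unfold norm; simpl; unfold abs; simpl. rewrite Rabs_right; lra. }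
  unfold norm in H; simpl in H; unfold abs in H; simpl in H.
  pose proof (Rle_abs (- Fbar a)). rewrite Rabs_Ropp in *. lra.
Qed.

Lemma Fpos a : 0 < a -> 0 < Fbar a.
Proof.
  intros ha. rewrite (Fdiff (a/2) a) by lra.
  pose proof (Fnonneg (a/2)).
  assert (0 < RInt f (a/2) a).
  { apply RInt_gt_0. lra. intros x Hx; apply Hf; lra. intros x Hx; apply Hf; lra. }
  lra.
Qed.

Lemma Fcont x : 0 < x -> continuous Fbar x.
Proof.
  intros hx.
  apply (continuous_ext_loc Fbar (fun y => Fbar (x/2) + RInt f (x/2) y)).
  - exists (mkposreal (x/2) ltac:(lra)). intros y Hy. apply ball_R in Hy. simpl in Hy.
    apply Rabs_def2 in Hy. symmetry. apply Fdiff; lra.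
  - apply (ex_derive_continuous (K:=R_AbsRing) (V:=R_NormedModule)). exists (0 + f x). apply (is_derive_plus (K:=R_AbsRing) (V:=R_NormedModule)).
    exact (is_derive_const (K:=R_AbsRing) (V:=R_NormedModule) (Fbar (x/2)) x). apply (is_derive_RInt f (RInt f (x/2)) (x/2) x).
    + exists (mkposreal (x/2) ltac:(lra)). intros y Hy. apply ball_R in Hy. simpl in Hy.
      apply Rabs_def2 in Hy. apply (RInt_correct (V:=R_CompleteNormedModule)). apply exR; lra.
    + apply Hf; lra.
Qed.

Lemma RInt_const_R a b c : @eq R (RInt (fun _ => c) a b) ((b - a) * c).
Proof. rewrite (RInt_const (V:=R_CompleteNormedModule)). reflexivity. Qed.

Lemma core (phi : R -> R) X0 u v :
  pos_cont phi -> (forall x y, 0 < x -> x < y -> phi x < phi y) ->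
  0 < X0 -> (forall t, X0 <= t -> phi t / 2 <= f t <= 2 * phi t) ->
  0 < u -> 2 * u <= v -> 2 * X0 <= v ->
  Fbar u / Fbar v <= (4 * Fbar X0 / phi X0) / v + 8 * (u / v).
Proof.
  intros Hpc Hpm hX0 Hb hu huv hv.
  assert (Hphi : forall t, 0 < t -> 0 < phi t) by (intros t ht; apply Hpc; auto).
  set (P := phi (v/2)).
  assert (HP0 : phi X0 <= P).
  { unfold P. destruct (Req_dec X0 (v/2)) as [E|E]. rewrite E; lra. left; apply Hpm; lra. }
  assert (HX0p := Hphi X0 hX0).
  assert (HA := Fnonneg X0 hX0).
  assert (Hlow : v * P / 4 <= Fbar v).
  { rewrite (Fdiff (v/2) v) by lra. pose proof (Fnonneg (v/2)) as H0.
    assert (v * P / 4 <= RInt f (v/2) v).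
    { assert (EE : @eq R (RInt (fun _ => P / 2) (v/2) v) (v * P / 4)) by (rewrite RInt_const_R; field). rewrite <- EE.
      apply RInt_le. lra. apply ex_RInt_const. apply exR; lra.
      intros t Ht. assert (phi (v/2) < phi t) by (apply Hpm; lra).
      pose proof (Hb t ltac:(lra)). unfold P; lra. }
    lra. }
  assert (Hup : Fbar u <= Fbar X0 + 2 * u * P).
  { assert (0 < P) by (unfold P; apply Hphi; lra).
    destruct (Rle_lt_dec u X0) as [H1|H1].
    - rewrite (Fdiff u X0) by lra.
      assert (0 <= RInt f u X0).
      { assert (EE : @eq R (RInt (fun _ => 0) u X0) 0) by (rewrite RInt_const_R; ring). rewrite <- EE.
        apply RInt_le. lra. apply ex_RInt_const. apply exR; lra.
        intros t Ht. left. apply Hf. lra. }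
      nra.
    - rewrite (Fdiff X0 u) by lra.
      assert (RInt f X0 u <= (u - X0) * (2 * P)).
      { rewrite <- RInt_const_R.
        apply RInt_le. lra. apply exR; lra. apply ex_RInt_const.
        intros t Ht. assert (phi t < phi (v/2)) by (apply Hpm; lra).
        pose proof (Hb t ltac:(lra)). unfold P; lra. }
      nra. }
  assert (0 < P) by (unfold P; apply Hphi; lra).
  assert (Hv : 0 < v) by lra.
  assert (HFv : 0 < Fbar v) by nra.
  set (c := 4 * Fbar X0 / phi X0 / v + 8 * (u / v)).
  assert (Hc : 0 <= c).
  { unfold c. apply Rplus_le_le_0_compat.
    apply Rmult_le_pos. apply Rmult_le_pos. lra. left; apply Rinv_0_lt_compat; lra. left; apply Rinv_0_lt_compat; lra.
    apply Rmult_le_pos. lra. apply Rmult_le_pos. lra. left; apply Rinv_0_lt_compat; lra. }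
  assert (E : c * (v * P / 4) = Fbar X0 * (P / phi X0) + 2 * u * P).
  { unfold c. field. split; lra. }
  assert (Hq : 1 <= P / phi X0).
  { apply (Rmult_le_reg_r (phi X0)). lra. unfold Rdiv. rewrite Rmult_assoc, Rinv_l by lra. lra. }
  apply (Rmult_le_reg_r (Fbar v)). lra.
  unfold Rdiv at 1. rewrite Rmult_assoc, Rinv_l by lra. rewrite Rmult_1_r.
  apply Rle_trans with (c * (v * P / 4)). 2: apply Rmult_le_compat_l; lra.
  rewrite E. nra.
Qed.
End S.

Theorem corollary1 (f Fbar : R -> R) :
  pos_cont f ->
  asymp_increasing f ->
  is_lim (fun x => f x / x) p_infty p_infty ->
  (forall x, 0 < x -> is_RInt_gen f (at_right 0) (at_point x) (Fbar x)) ->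
  preserves_superexp Fbar.
Proof.
  intros Hf HA _ HF. split.
  { intros x hx. split. apply (Fcont f Fbar Hf HF x hx). apply (Fpos f Fbar Hf HF x hx). }
  intros g [Hgc [Hginf Hgr]] eps heps.
  destruct HA as [phi [Hpc [Hpm Hpl]]].
  apply is_lim_spec in Hpl.
  destruct (Hpl (mkposreal (1/2) ltac:(lra))) as [X HX]. simpl in HX.
  set (X0 := Rmax X 0 + 1).
  assert (hX0 : 0 < X0) by (unfold X0; pose proof (Rmax_r X 0); lra).
  assert (Hb : forall t, X0 <= t -> phi t / 2 <= f t <= 2 * phi t).
  { intros t ht. assert (X < t) by (unfold X0 in ht; pose proof (Rmax_l X 0); lra).
    specialize (HX t H). assert (0 < phi t) by (apply Hpc; lra).
    set (r := f t / phi t) in HX.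
    assert (f t = r * phi t) by (unfold r; field; lra).
    apply Rabs_def2 in HX. rewrite H1. nra. }
  set (K := 4 * Fbar X0 / phi X0).
  assert (HK : 0 <= K).
  { unfold K. pose proof (Fnonneg f Fbar Hf HF X0 hX0). assert (0 < phi X0) by (apply Hpc; lra).
    apply Rmult_le_pos. lra. left; apply Rinv_0_lt_compat; lra. }
  apply is_lim_spec in Hginf. apply is_lim_spec.
  intros d. simpl.
  destruct (Hginf (2 * X0)) as [N1 H1].
  destruct (Hginf (2 * K / d)) as [N2 H2].
  specialize (Hgr eps heps). apply is_lim_spec in Hgr.
  assert (hm : 0 < Rmin (1/2) (d/16)) by (apply Rmin_glb_lt; pose proof (cond_pos d); lra).
  destruct (Hgr (mkposreal _ hm)) as [N3 H3]. simpl in H3.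
  exists (Rmax (Rmax N1 N2) (Rmax N3 eps)). intros x Hx.
  pose proof (Rmax_l (Rmax N1 N2) (Rmax N3 eps)). pose proof (Rmax_r (Rmax N1 N2) (Rmax N3 eps)).
  pose proof (Rmax_l N1 N2). pose proof (Rmax_r N1 N2). pose proof (Rmax_l N3 eps). pose proof (Rmax_r N3 eps).
  specialize (H1 x ltac:(lra)). specialize (H2 x ltac:(lra)). specialize (H3 x ltac:(lra)).
  pose proof (cond_pos d) as hd.
  assert (hu : 0 < g (x - eps)) by (apply Hgc; lra).
  assert (hv : 0 < g x) by (apply Hgc; lra).
  set (u := g (x - eps)) in *. set (v := g x) in *.
  rewrite Rminus_0_r in H3 |- *.
  pose proof (Rmin_l (1/2) (d/16)). pose proof (Rmin_r (1/2) (d/16)).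
  apply Rabs_def2 in H3.
  assert (huv : 2 * u <= v).
  { assert (u / v * v = u) by (field; lra). nra. }
  pose proof (core f Fbar Hf HF phi X0 u v Hpc Hpm hX0 Hb hu huv ltac:(lra)) as Hc.
  fold K in Hc.
  assert (0 < Fbar u) by (apply (Fpos f Fbar Hf HF); lra).
  assert (0 < Fbar v) by (apply (Fpos f Fbar Hf HF); lra).
  assert (0 < Fbar u / Fbar v) by (apply Rdiv_lt_0_compat; lra).
  assert (K / v < d / 2).
  { apply (Rmult_lt_reg_r v). lra. unfold Rdiv at 1. rewrite Rmult_assoc, Rinv_l by lra.
    assert (2 * K / d * d = 2 * K) by (field; lra). nra. }
  rewrite Rabs_right by lra. lra.
Qed.
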